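(* Let $\beta$ be a totally positive quadratic integer with minimal polynomial $x^2 - Ex + C$, where $E, C \in \mathbb{Z}_{\geq 1}$. (i) If $C \geq 2E$, then $p_\beta(E\beta^2) \geq 4$. (ii) If $C \geq 2E - 3$, then $p_\beta(E\beta^3) \geq 5$. In particular, if $C \geq 2E - 3$, then it is not true that $p_\beta(E\beta^n) = n+1$ for every integer $n \geq 0$.
   Context: A quadratic integer is a root of a monic irreducible quadratic polynomial in $\mathbb{Z}[x]$; it is totally positive if both it and its conjugate are positive. For $\alpha \in \mathbb{C}$, $p_\beta(\alpha) \in \mathbb{Z}_{\geq 0}\cup\{\infty\}$ is the number of polynomials $f \in \mathbb{Z}_{\geq 0}[x]$ (non-negative integer coefficients) with $f(\beta) = \alpha$. Note $E = \beta + \beta'$ is the trace of $\beta$. *)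

(* Defs.v *)
From HB Require Import structures.
From mathcomp Require Import all_boot all_order all_algebra.
Set Implicit Arguments. Unset Strict Implicit. Unset Printing Implicit Defensive.
Import Order.TTheory GRing.Theory Num.Theory.
Local Open Scope ring_scope.

(* beta is a totally positive quadratic integer with minimal polynomial
   x^2 - E x + C: beta is a root of this monic integer polynomial, the
   polynomial is irreducible, and both beta and its conjugate
   beta' = E - beta are positive. *)
Definition min_poly_EC (E C : int) : {poly int} := 'X^2 - E%:P * 'X + C%:P.

Definition totally_pos_quad_int (R : realFieldType) (beta : R) (E C : int) : Prop :=
  [/\ irreducible_poly (min_poly_EC E C),
      (map_poly intr (min_poly_EC E C)).[beta] = 0,
      0 < beta & 0 < E%:~R - beta].

Definition is_rep (R : realFieldType) (beta alpha : R) (f : {poly int}) : Prop :=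
  (forall i, 0 <= f`_i) /\ (map_poly intr f).[beta] = alpha.

(* p_beta(alpha) = n  (n finite): the representations are exactly the
   elements of a duplicate-free list of length n. *)
Definition p_beta_eq (R : realFieldType) (beta alpha : R) (n : nat) : Prop :=
  exists s : seq {poly int},
    [/\ uniq s, size s = n & forall f, f \in s <-> is_rep beta alpha f].

Definition p_beta_ge (R : realFieldType) (beta alpha : R) (k : nat) : Prop :=
  exists s : seq {poly int},
    [/\ uniq s, size s = k & forall f, f \in s -> is_rep beta alpha f].

(* Main.v *)
Require Import Defs.
From HB Require Import structures.
From mathcomp Require Import all_boot all_order all_algebra.
From mathcomp Require Import zify ring lra.
Import Order.TTheory GRing.Theory Num.Theory.
Local Open Scope ring_scope.

Lemma eval_Poly (R : realFieldType) (s : seq int) (x : R) :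
  (map_poly intr (Poly s)).[x] = \sum_(i < size s) (s`_i)%:~R * x ^+ i.
Proof.
rewrite map_Poly (horner_coef_wide (n := size s)).
  apply: eq_bigr => i _; rewrite coef_Poly (nth_map 0) //.
by apply: leq_trans (size_Poly _) _; rewrite size_map.
Qed.

Lemma nonneg_Poly (s : seq int) : all (fun a => 0 <= a) s -> forall i, 0 <= (Poly s)`_i.
Proof.
move=> /allP h i; rewrite coef_Poly.
case: (ltnP i (size s)) => hi; first by apply: h; exact: mem_nth.
by rewrite nth_default.
Qed.

Lemma neq_Poly (s t : seq int) i : s`_i != t`_i -> Poly s != Poly t.
Proof. by apply: contra => /eqP h; rewrite -(coef_Poly s) h coef_Poly. Qed.

Lemma root_of (R : realFieldType) (beta : R) E C :
  totally_pos_quad_int beta E C -> beta ^+ 2 - E%:~R * beta + C%:~R = 0.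
Proof.
case=> _ h _ _; rewrite -{}h /min_poly_EC.
by rewrite !rmorphD !rmorphN !rmorphM /= map_polyX !map_polyC /= !hornerE expr2.
Qed.

Lemma key (R : realFieldType) (beta : R) E C (g lhs rhs : R) :
  beta ^+ 2 - E%:~R * beta + C%:~R = 0 ->
  lhs - rhs = g * (beta ^+ 2 - E%:~R * beta + C%:~R) -> lhs = rhs.
Proof. by move=> -> ; rewrite mulr0 => /eqP; rewrite subr_eq0 => /eqP. Qed.


Lemma part1 (R : realFieldType) (beta : R) (E C : int) :
  beta ^+ 2 - E%:~R * beta + C%:~R = 0 -> 1 <= E -> 2 * E <= C ->
  p_beta_ge beta (E%:~R * beta ^+ 2) 4.
Proof.
move=> hr hE hC.
exists [:: Poly [:: 0; 0; E]; Poly [:: 0; C; 0; 1]; Poly [:: C; C - E; 1; 1];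
           Poly [:: 2 * C; C - 2 * E; 2; 1]]; split => //.
  rewrite !cons_uniq !in_cons !in_nil !orbF !andbT !negb_or.
  repeat (apply/andP; split);
  first [ apply: (@neq_Poly _ _ 0); rewrite /=; lia
        | apply: (@neq_Poly _ _ 1); rewrite /=; lia
        | apply: (@neq_Poly _ _ 2); rewrite /=; lia
        | apply: (@neq_Poly _ _ 3); rewrite /=; lia
        | apply: (@neq_Poly _ _ 4); rewrite /=; lia
        | idtac ].
move=> f; rewrite !inE => /or4P [] /eqP ->; split;
  (try (apply: nonneg_Poly; rewrite /=; lia));
  rewrite eval_Poly /= !big_ord_recl big_ord0 /=.
all: try (apply: (@key _ _ _ _ 0 _ _ hr); ring).
all: try (apply: (@key _ _ _ _ beta _ _ hr); ring).
all: try (apply: (@key _ _ _ _ (beta + 1) _ _ hr); ring).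
all: try (apply: (@key _ _ _ _ (beta + 2) _ _ hr); ring).
Qed.

Lemma part2 (R : realFieldType) (beta : R) (E C : int) :
  beta ^+ 2 - E%:~R * beta + C%:~R = 0 -> 1 <= E -> 1 <= C -> E <= C -> 3 * E <= 2 * C -> 2 * E - 3 <= C ->
  p_beta_ge beta (E%:~R * beta ^+ 3) 5.
Proof.
move=> hr hE hC1 hC hC2 hC3.
exists [:: Poly [:: 0; 0; 0; E]; Poly [:: 0; 0; C; 0; 1];
           Poly [:: 0; C; C - E; 1; 1]; Poly [:: C; C - E; C - E + 1; 1; 1];
           Poly [:: 3 * C; 2 * C - 3 * E; C - 2 * E + 3; 2; 1]]; split => //.
  rewrite !cons_uniq !in_cons !in_nil !orbF !andbT !negb_or.
  repeat (apply/andP; split);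
  first [ apply: (@neq_Poly _ _ 0); rewrite /=; lia
        | apply: (@neq_Poly _ _ 1); rewrite /=; lia
        | apply: (@neq_Poly _ _ 2); rewrite /=; lia
        | apply: (@neq_Poly _ _ 3); rewrite /=; lia
        | apply: (@neq_Poly _ _ 4); rewrite /=; lia
        | idtac ].
move=> f; rewrite !inE => /orP [/eqP ->|/or4P [] /eqP ->]; split;
  (try (apply: nonneg_Poly; rewrite /=; lia));
  rewrite eval_Poly /= !big_ord_recl big_ord0 /=.
all: try (apply: (@key _ _ _ _ 0 _ _ hr); ring).
all: try (apply: (@key _ _ _ _ (beta ^+ 2) _ _ hr); ring).
all: try (apply: (@key _ _ _ _ (beta ^+ 2 + beta) _ _ hr); ring).
all: try (apply: (@key _ _ _ _ (beta ^+ 2 + beta + 1) _ _ hr); ring).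
all: try (apply: (@key _ _ _ _ (beta ^+ 2 + 2 * beta + 3) _ _ hr); ring).
Qed.

Lemma disc (R : realFieldType) (beta : R) (E C : int) :
  totally_pos_quad_int beta E C -> 4 * C < E * E.
Proof.
move=> hb; have hr := @root_of _ _ _ _ hb; case: hb => hirr _ _ _.
have h0 : 0 <= E * E - 4 * C.
  rewrite -(ler0z R).
  have -> : ((E * E - 4 * C)%:~R : R) =
     (2 * beta - E%:~R) ^+ 2 - 4 * (beta ^+ 2 - E%:~R * beta + C%:~R).
    by rewrite rmorphB !rmorphM /=; ring.
  by rewrite hr mulr0 subr0 sqr_ge0.
case: (ltrP (4 * C) (E * E)) => // hle.
have hEq : E * E = 4 * C by lia.
have hdv := divz_eq E 2.
set k := (E %/ 2)%Z in hdv; set m := (E %% 2)%Z in hdv.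
have hm0 : 0 <= m by apply: modz_ge0.
have hm1 : m < 2 by apply: ltz_pmod.
have hm : m = 0.
  have [->|hm] : m = 0 \/ m = 1 by lia. by [].
  rewrite hm in hdv; rewrite hdv in hEq.
  have : (4 * (C - k * k - k) = 1)%R by nia.
  lia.
rewrite hm addr0 in hdv.
have hCk : C = k * k by nia.
have hp : min_poly_EC E C = ('X - k%:P) ^+ 2.
  by rewrite /min_poly_EC hdv hCk !rmorphM /=; ring.
have := hirr.2 ('X - k%:P).
rewrite size_XsubC hp => /(_ isT).
rewrite expr2 dvdp_mulIl => /(_ isT) /eqp_size.
by rewrite -expr2 size_exp_XsubC size_XsubC.
Qed.

Lemma arith (E C : int) : 1 <= E -> 1 <= C -> 4 * C < E * E -> 2*E - 3 <= C -> E <= C /\ 3 * E <= 2 * C.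
Proof.
move=> h1 h0 h3 h2.
have [h|h] : E <= 6 \/ 7 <= E by lia.
  move: h2 h3; have [->|[->|[->|[->|[->|->]]]]] : (E = 1 \/ E = 2 \/ E = 3 \/ E = 4 \/ E = 5 \/ E = 6) by lia.
  all: lia.
Qed.

Theorem proposition12 (R : realFieldType) (beta : R) (E C : int)
  (hE : 1 <= E) (hC : 1 <= C)
  (hbeta : totally_pos_quad_int beta E C) :
  [/\ (2 * E <= C -> p_beta_ge beta (E%:~R * beta ^+ 2) 4),
      (2 * E - 3 <= C -> p_beta_ge beta (E%:~R * beta ^+ 3) 5)
    & (2 * E - 3 <= C ->
       ~ (forall n : nat, p_beta_eq beta (E%:~R * beta ^+ n) n.+1))].
Proof.
have hr := @root_of _ _ _ _ hbeta.
have hd := @disc _ _ _ _ hbeta.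
have hcc : 2 * E - 3 <= C -> E <= C /\ 3 * E <= 2 * C.
  by move=> h2; exact: (arith _ _ hE hC hd h2).
have p2 : 2 * E - 3 <= C -> p_beta_ge beta (E%:~R * beta ^+ 3) 5.
  by move=> h0; have [h1 h2] := hcc h0; exact: (part2 _ _ _ _ hr hE hC h1 h2 h0).
split => //; first by move=> h; exact: (part1 _ _ _ _ hr hE h).
move=> h hall.
have [s [us ss hs]] := p2 h.
have [t [ut st ht]] := hall 3%N.
have : (size s <= size t)%N.
  apply: uniq_leq_size => // f /hs; by rewrite ht.
by rewrite ss st.
Qed.
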